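(* Let $\gamma_1,\gamma_2,\gamma_3\in\mathbb{R}$ with $\gamma_1,\gamma_2\ge 0$, and let $\mathcal{L}(X)=\frac12\sum_{k=1}^3\gamma_k(\sigma_kX\sigma_k-X)$ on $\mathcal{M}_2$. If $e^{t\mathcal{L}}$ is a unital Schwarz map for every $t\ge 0$, then $\gamma_1+\gamma_2+4\gamma_3\ge 0$. Equivalently, in terms of $\Gamma_1=\gamma_2+\gamma_3$, $\Gamma_2=\gamma_3+\gamma_1$, $\Gamma_3=\gamma_1+\gamma_2$, one has $\Gamma_1+\Gamma_2\ge\frac12\Gamma_3$.
   Context: $\sigma_1,\sigma_2,\sigma_3$ are the Pauli matrices. A unital Schwarz map on $\mathcal{M}_n$ is a linear map $\Phi$ with $\Phi(\mathbb{1})=\mathbb{1}$ and $\Phi(X^\dagger X)\ge\Phi(X)^\dagger\Phi(X)$ for all $X\in\mathcal{M}_n$. Note that $\mathcal{L}$ is self-dual with respect to the Hilbert–Schmidt inner product, i.e. $\mathcal{L}^\ddagger=\mathcal{L}$. *)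

(* Defs.v *)
From HB Require Import structures.
From mathcomp Require Import all_boot all_order all_algebra.
From mathcomp Require Import all_classical all_reals all_analysis.
From mathcomp Require Import complex.
Set Implicit Arguments. Unset Strict Implicit. Unset Printing Implicit Defensive.
Import Order.TTheory GRing.Theory Num.Theory.
Import numFieldNormedType.Exports.
Local Open Scope ring_scope.
Local Open Scope complex_scope.

Section Defs.
Variable R : realType.
Local Notation C := (R[i]).
Local Notation Mx := ('M[C]_2).

Definition adj (m n : nat) (A : 'M[C]_(m, n)) : 'M[C]_(n, m) := map_mx (@conjc R) A^T.

(* Positive semidefinite: v^dagger A v >= 0 for all v (in the order of C,
   i.e. real and nonnegative; over C this includes hermiticity). *)
Definition psd (A : Mx) : Prop := forall v : 'cV[C]_2, 0 <= (adj v *m A *m v) 0 0.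

Definition pauli1 : Mx := \matrix_(i < 2, j < 2) (if i != j :> nat then 1 else 0).
Definition pauli2 : Mx :=
  \matrix_(i < 2, j < 2) (if (i == 0 :> nat) && (j == 1 :> nat) then - 'i
                          else if (i == 1 :> nat) && (j == 0 :> nat) then 'i else 0).
Definition pauli3 : Mx :=
  \matrix_(i < 2, j < 2) (if i == j :> nat then (if i == 0 :> nat then 1 else -1) else 0).

Definition Lgen (g1 g2 g3 : R) (X : Mx) : Mx :=
  (2^-1 : R)%:C *: ( (g1%:C) *: (pauli1 *m X *m pauli1 - X)
                   + (g2%:C) *: (pauli2 *m X *m pauli2 - X)
                   + (g3%:C) *: (pauli3 *m X *m pauli3 - X)).

Definition expL_partial (g1 g2 g3 t : R) (X : Mx) (N : nat) : Mx :=
  \sum_(n < N) ((t ^+ n / (n`!)%:R)%:C *: iter n (Lgen g1 g2 g3) X).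

Definition expL (g1 g2 g3 t : R) (X : Mx) : Mx :=
  \matrix_(i < 2, j < 2)
    Complex (limn (fun N => @complex.Re R (expL_partial g1 g2 g3 t X N i j)))
            (limn (fun N => @complex.Im R (expL_partial g1 g2 g3 t X N i j))).

Definition unital_schwarz (Phi : Mx -> Mx) : Prop :=
  (forall (a : C) (X Y : Mx), Phi (a *: X + Y) = a *: Phi X + Phi Y) /\
  Phi 1%:M = 1%:M /\
  (forall X : Mx, psd (Phi (adj X *m X) - adj (Phi X) *m Phi X)).

End Defs.

(* Main.v *)
Set Warnings "-all".
Require Import Defs.
From HB Require Import structures.
From mathcomp Require Import all_boot all_order all_algebra.
From mathcomp Require Import all_classical all_reals all_analysis.
From mathcomp Require Import complex.
From mathcomp.algebra_tactics Require Import ring lra.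
Import Order.TTheory GRing.Theory Num.Theory.
Import numFieldNormedType.Exports.
Local Open Scope classical_set_scope.
Local Open Scope ring_scope.
Local Open Scope complex_scope.

Lemma XX (R : realType) :
  let X := (2^-1 : R)%:C *: pauli1 R + ((2^-1 : R)%:C * 'i) *: pauli2 R in
  adj X *m X = (2^-1 : R)%:C *: 1%:M + (- (2^-1 : R))%:C *: pauli3 R.
Proof.
move=> X; apply/matrixP => i j; rewrite /X /adj !mxE !big_ord_recr big_ord0 /= !mxE.
case: i => [[|[|//]] ?]; case: j => [[|[|//]] ?] /=.
all: apply/eqP; rewrite eq_complex /=; apply/andP; split; apply/eqP.
all: by field.
Qed.

Lemma final (R : realType) (G1 G2 G3 : R) :
 (forall t : R, 0 < t -> (expR (t * - G1) + expR (t * - G2))^+2 <= 2 * (1 + expR (t * - G3))) ->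
 0 <= 4 * (G1 + G2) - 2 * G3.
Proof.
move=> H; rewrite leNgt; apply/negP => HD.
pose S := G1 + G2. pose A := S ^+ 2 - 4 * S * G3. pose B := S ^+ 2 * G3.
pose D := 2 * G3 - 4 * S.
have D0 : 0 < D by rewrite /D /S; lra.
pose K := 1 + `|A| + `|B| + `|S| + `|G3|.
have KA : `|A| <= K by rewrite /K; have := normr_ge0 B; have := normr_ge0 S; have := normr_ge0 G3; lra.
have KB : `|B| <= K by rewrite /K; have := normr_ge0 A; have := normr_ge0 S; have := normr_ge0 G3; lra.
have KS : `|S| <= K by rewrite /K; have := normr_ge0 B; have := normr_ge0 A; have := normr_ge0 G3; lra.
have KG : `|G3| <= K by rewrite /K; have := normr_ge0 B; have := normr_ge0 S; have := normr_ge0 A; lra.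
have K1 : 1 <= K by rewrite /K; have := normr_ge0 B; have := normr_ge0 S; have := normr_ge0 A; have := normr_ge0 G3; lra.
pose t := D / (2 * (D + 1) * K).
have t0 : 0 < t by rewrite /t divr_gt0 // !mulr_gt0 //; lra.
have hD1 : D + 1 != 0 by rewrite gt_eqF //; lra.
have hK0 : K != 0 by rewrite gt_eqF //; lra.
have h20 : (2:R) != 0 by rewrite gt_eqF //; lra.
have hD0 : D != 0 by rewrite gt_eqF //; lra.
have tK : t * K = D / (2 * (D + 1)).
  rewrite /t; by field; rewrite ?hD1 ?hK0 ?h20 ?hD0.
have tKD : 2 * (t * K) < D.
  rewrite tK; have -> : 2 * (D / (2 * (D + 1))) = D / (D + 1).
    by field; rewrite ?hD1 ?hK0 ?h20 ?hD0.
  rewrite ltr_pdivrMr; last by lra.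
  nra.
have tKh : t * K <= 1/2.
  rewrite tK ler_pdivrMr; last by lra.
  lra.
have tS : t * `|S| <= 1/2 by have := ler_wpM2l (ltW t0) KS; lra.
have tG : t * `|G3| <= 1/2 by have := ler_wpM2l (ltW t0) KG; lra.
have t1 : t <= 1/2 by have := ler_wpM2l (ltW t0) K1; lra.
have tA : t * `|A| <= t * K by apply: ler_wpM2l => //; exact: ltW.
have tB : t * `|B| <= t * K by apply: ler_wpM2l => //; exact: ltW.
pose e1 := expR (t * - G1). pose e2 := expR (t * - G2). pose e3 := expR (t * - G3).
have He := H t t0; rewrite -/e1 -/e2 -/e3 in He.
have h1 : 1 + t * - G1 <= e1 := expR_ge1Dx _.
have h2 : 1 + t * - G2 <= e2 := expR_ge1Dx _.
have h3 : 1 + t * G3 <= expR (t * G3) := expR_ge1Dx _.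
have E3 : expR (t * G3) * e3 = 1 by rewrite /e3 mulrN expRxMexpNx_1.
have e30 : 0 <= e3 := expR_ge0 _.
have SS : t * S <= t * `|S| by apply: ler_wpM2l; [exact: ltW | exact: ler_norm].
have GG : - (t * G3) <= t * `|G3|.
  rewrite -mulrN; apply: ler_wpM2l; [exact: ltW|]. by rewrite -normrN ler_norm.
have hS : 2 - t * S <= e1 + e2 by rewrite /S; lra.
have hS0 : 0 <= 2 - t * S by lra.
have q0 : 0 < 1 + t * G3 by lra.
have e3q : e3 * (1 + t * G3) <= 1.
  rewrite -E3 mulrC; apply: ler_wpM2r => //; lra.
have sq : (2 - t * S) ^+ 2 <= (e1 + e2) ^+ 2 by rewrite ler_pXn2r // ?nnegrE //; lra.
have P : (2 - t * S) ^+ 2 * (1 + t * G3) <= 2 * (1 + t * G3) + 2.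
  have : (2 - t * S) ^+ 2 * (1 + t * G3) <= 2 * (1 + e3) * (1 + t * G3).
    apply: ler_wpM2r; [exact: ltW | lra].
  nra.
have Id : (2 - t * S) ^+ 2 * (1 + t * G3) - (2 * (1 + t * G3) + 2) = t * (D + t * A + t ^+ 2 * B).
  rewrite /D /A /B; ring.
have P2 : D + t * A + t ^+ 2 * B <= 0.
  have : t * (D + t * A + t ^+ 2 * B) <= 0 by rewrite -Id; lra.
  by rewrite pmulr_rle0.
have AA : - (t * `|A|) <= t * A.
  rewrite -mulrN; apply: ler_wpM2l; [exact: ltW|]. by rewrite lerNl -normrN ler_norm.
have BB0 : - `|B| <= B by rewrite lerNl -normrN ler_norm.
have BB : - (t * `|B|) <= t ^+ 2 * B.
  have tt : t ^+ 2 <= t by rewrite expr2; nra.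
  have nB := normr_ge0 B.
  nra.
lra.
Qed.

Lemma vMv (R : realType) (M : 'M[R[i]]_2) :
  (adj (\col_(k < 2) (if k == 1 :> nat then 1 else 0)) *m M
   *m \col_(k < 2) (if k == 1 :> nat then 1 else 0)) 0 0 = M 1 1.
Proof.
rewrite /adj !mxE !big_ord_recr !big_ord0 /= !mxE !big_ord_recr !big_ord0 /= !mxE /=.

have E0 : (0:R) +i* (- 0) = 0 by apply/eqP; rewrite eq_complex /= oppr0 !eqxx.
have E1 : (1:R) +i* (- 0) = 1 by apply/eqP; rewrite eq_complex /= oppr0 !eqxx.
have Eo : (ord_max : 'I_2) = 1 by apply/val_inj.
rewrite E0 E1 Eo; ring.
Qed.

Lemma YY (R : realType) (l1 l2 : R) :
  (adj ((2^-1 : R)%:C *: (l1%:C *: pauli1 R) + ((2^-1 : R)%:C * 'i) *: (l2%:C *: pauli2 R)) *m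
   ((2^-1 : R)%:C *: (l1%:C *: pauli1 R) + ((2^-1 : R)%:C * 'i) *: (l2%:C *: pauli2 R))) 1 1
  = ((l1 + l2) ^+ 2 / 4)%:C.
Proof.
rewrite /adj !mxE !big_ord_recr big_ord0 /= !mxE.
apply/eqP; rewrite eq_complex /=; apply/andP; split; apply/eqP.
all: by field.
Qed.

Section S.
Variable R : realType.
Variables g1 g2 g3 : R.

Lemma L1 : Lgen g1 g2 g3 (pauli1 R) = (- (g2 + g3))%:C *: pauli1 R.
Proof.
apply/matrixP => i j; rewrite /Lgen !mxE !big_ord_recr big_ord0 /= !mxE.
rewrite !big_ord_recr !big_ord0 /= !mxE.
case: i => [[|[|//]] ?]; case: j => [[|[|//]] ?] /=.
all: apply/eqP; rewrite eq_complex /=; apply/andP; split; apply/eqP.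
all: by field.
Qed.

Lemma L2 : Lgen g1 g2 g3 (pauli2 R) = (- (g1 + g3))%:C *: pauli2 R.
Proof.
apply/matrixP => i j; rewrite /Lgen !mxE !big_ord_recr big_ord0 /= !mxE.
rewrite !big_ord_recr !big_ord0 /= !mxE.
case: i => [[|[|//]] ?]; case: j => [[|[|//]] ?] /=.
all: apply/eqP; rewrite eq_complex /=; apply/andP; split; apply/eqP.
all: by field.
Qed.

Lemma L3 : Lgen g1 g2 g3 (pauli3 R) = (- (g1 + g2))%:C *: pauli3 R.
Proof.
apply/matrixP => i j; rewrite /Lgen !mxE !big_ord_recr big_ord0 /= !mxE.
rewrite !big_ord_recr !big_ord0 /= !mxE.
case: i => [[|[|//]] ?]; case: j => [[|[|//]] ?] /=.
all: apply/eqP; rewrite eq_complex /=; apply/andP; split; apply/eqP.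
all: by field.
Qed.

Lemma Lscale (c : R[i]) X : Lgen g1 g2 g3 (c *: X) = c *: Lgen g1 g2 g3 X.
Proof.
apply/matrixP => i j; rewrite /Lgen !mxE !big_ord_recr big_ord0 /= !mxE.
rewrite !big_ord_recr !big_ord0 /= !mxE.
ring.
Qed.
Lemma lim_scale (s : nat -> R) (l a : R) : s @ \oo --> l ->
  limn (fun N => s N * a) = l * a.
Proof.
move=> hs; apply: cvg_lim => //; exact: cvgMr_tmp.
Qed.

Lemma expL_eig t r X : Lgen g1 g2 g3 X = r%:C *: X ->
  expL g1 g2 g3 t X = (expR (t * r))%:C *: X.
Proof.
move=> HX.
have Hit n : iter n (Lgen g1 g2 g3) X = (r ^+ n)%:C *: X.
  elim: n => [|n IH]; first by rewrite /= expr0 scale1r.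
  by rewrite iterS IH Lscale HX scalerA exprS -rmorphM mulrC.
pose s N := series (exp_coeff (t * r)) N.
have Hs : forall i j, forall N, expL_partial g1 g2 g3 t X N i j = (s N)%:C * X i j.
  move=> i j; elim => [|N IH].
    by rewrite /expL_partial /s /series /= big_ord0 big_geq // mxE mul0r.
  rewrite /expL_partial big_ord_recr /= mxE -/(expL_partial _ _ _ _ _ _) IH.
  rewrite /s /series /= big_nat_recr //= Hit mxE /exp_coeff /=.
rewrite mxE rmorphD exprMn.
  have -> : t ^+ N * r ^+ N / N`!%:R = t ^+ N / N`!%:R * r ^+ N by ring.
  rewrite (rmorphM (real_complex R)); ring.
have Hc : s @ \oo --> expR (t * r) by apply: is_cvg_series_exp_coeff.
apply/matrixP => i j; rewrite !mxE.
have -> : (fun N => @complex.Re R (expL_partial g1 g2 g3 t X N i j)) = (fun N => s N * @complex.Re R (X i j)).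
  by apply/funext => N; rewrite Hs; case: (X i j) => a b /=; ring.
have -> : (fun N => @complex.Im R (expL_partial g1 g2 g3 t X N i j)) = (fun N => s N * @complex.Im R (X i j)).
  by apply/funext => N; rewrite Hs; case: (X i j) => a b /=; ring.
rewrite !(lim_scale _ _ _ Hc); case: (X i j) => a b /=.
apply/eqP; rewrite eq_complex /=; apply/andP; split; apply/eqP; ring.
Qed.
End S.

Theorem mainTheorem3 (R : realType) (g1 g2 g3 : R) :
  0 <= g1 -> 0 <= g2 ->
  (forall t : R, 0 <= t -> unital_schwarz (expL g1 g2 g3 t)) ->
  0 <= g1 + g2 + 4 * g3.
Proof.
move=> _ _ H.
suff : 0 <= 4 * ((g2 + g3) + (g1 + g3)) - 2 * (g1 + g2) by lra.
apply: final => t t0.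
have := H t (ltW t0); rewrite /unital_schwarz => -[lin [one sch]].
set Phi := expL g1 g2 g3 t in lin one sch.
have P1 : Phi (pauli1 R) = (expR (t * - (g2 + g3)))%:C *: pauli1 R by apply: expL_eig; apply: L1.
have P2 : Phi (pauli2 R) = (expR (t * - (g1 + g3)))%:C *: pauli2 R by apply: expL_eig; apply: L2.
have P3 : Phi (pauli3 R) = (expR (t * - (g1 + g2)))%:C *: pauli3 R by apply: expL_eig; apply: L3.
have Phi0 : Phi 0 = 0.
  have E := lin 1 0 0; rewrite !scale1r addr0 in E.
  by apply/(addrI (Phi 0)); rewrite addr0 -E.
have PhiZ a Y : Phi (a *: Y) = a *: Phi Y by rewrite -[a *: Y]addr0 lin Phi0 addr0.
set X := (2^-1 : R)%:C *: pauli1 R + ((2^-1 : R)%:C * 'i) *: pauli2 R.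
have PX : Phi X = (2^-1 : R)%:C *: ((expR (t * - (g2 + g3)))%:C *: pauli1 R)
     + ((2^-1 : R)%:C * 'i) *: ((expR (t * - (g1 + g3)))%:C *: pauli2 R).
  by rewrite /X lin PhiZ P1 P2.
have PXX : Phi (adj X *m X) = (2^-1 : R)%:C *: 1%:M
     + (- (2^-1 : R))%:C *: ((expR (t * - (g1 + g2)))%:C *: pauli3 R).
  by rewrite XX lin PhiZ one P3.
have := sch X; rewrite PXX PX => /(_ (\col_(k < 2) (if k == 1 :> nat then 1 else 0))).
set l1 := expR (t * - (g2 + g3)). set l2 := expR (t * - (g1 + g3)). set l3 := expR (t * - (g1 + g2)).
rewrite vMv.
have -> : forall A B : 'M[R[i]]_2, (A - B) 1 1 = A 1 1 - B 1 1 by move=> A B; rewrite !mxE.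
rewrite YY !mxE /= lecE /= => /andP[_ h].
nra.
Qed.
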